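(* Regard the grid parabola $P_t$ and the reference parabola $\Pi_t\colon y=x^2/(2H_t)$ as graphs of functions $P_t(x)$, $\Pi_t(x)$ on $\mathbb R$. Then $\sup_{x\in\mathbb R}|P_t(x)-\Pi_t(x)|=O(t^2\log t)$ as $t\to\infty$.
   Context: Fix an integer $t\ge1$. Let $S_t$ be the set of rational numbers $s$ which, written in lowest terms as $s=a/b$ with $a\in\mathbb Z$ and $b$ a positive integer, satisfy $b\le t$. For $s=a/b\in S_t$ let $v_s=\lfloor t/b\rfloor\,(b,a)$, and $V_t=\{v_s:s\in S_t\}$. The grid parabola $P_t$ is the infinite convex polygonal chain obtained by concatenating the vectors of $V_t$ in order of increasing slope, positioned so that the edge given by $(t,0)$ goes from $(-t/2,0)$ to $(t/2,0)$. $H_t=\sum_{1\le y\le x\le t,\ \gcd(x,y)=1}\lfloor t/x\rfloor\,x$. *)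

(* Defs.v *)
From HB Require Import structures.
From mathcomp Require Import all_boot all_order all_algebra.
From mathcomp Require Import reals exp.
Set Implicit Arguments. Unset Strict Implicit. Unset Printing Implicit Defensive.
Import Order.TTheory GRing.Theory Num.Theory.

(* Membership of the rational s = a/b (a : int with |a| = n) in S_t:
   b positive, b <= t, and a/b in lowest terms (gcd(|a|,b) = 1). *)
Definition inSt (t n b : nat) : bool := (0 < b <= t)%N && coprime n b.

(* For s = n/b > 0 in S_t: sum of the x-components (resp. y-components)
   of the vectors v_{s'} = floor(t/b') (b', n') over all s' = n'/b' in S_t
   with 0 < s' < s.  (Any such s' has n' < n t, so the range is complete.) *)
Definition Sx (t n b : nat) : nat :=
  \sum_(1 <= b' < t.+1)
     \sum_(1 <= n' < (n * t).+1 | inSt t n' b' && (n' * b < n * b')%N)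
        ((t %/ b') * b')%N.

Definition Sy (t n b : nat) : nat :=
  \sum_(1 <= b' < t.+1)
     \sum_(1 <= n' < (n * t).+1 | inSt t n' b' && (n' * b < n * b')%N)
        ((t %/ b') * n')%N.

Local Open Scope ring_scope.

(* (x,y) lies on the grid parabola P_t.
   - slope 0 (s = 0/1): the edge v_0 = (t,0) from (-t/2,0) to (t/2,0);
   - slope s = n/b > 0: the edge v_s starts at
       (t/2 + Sx t n b, Sy t n b)  and has vector floor(t/b) (b, n);
   - slope s = -n/b < 0: by the symmetry s -> -s of S_t, the edge v_s is the
     mirror image (x -> -x) of the edge v_{n/b}.
   [neg] selects the negative-slope mirror edge. *)
Definition on_grid_parabola {R : realType} (t : nat) (x y : R) : Prop :=
  exists (n b : nat) (neg : bool) (l : R),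
    [/\ inSt t n b, 0 <= l, l <= 1 &
      if n == 0%N then x = - (t%:R / 2) + l * t%:R /\ y = 0
      else
        let X := t%:R / 2 + (Sx t n b)%:R + l * ((t %/ b) * b)%N%:R in
        let Y := (Sy t n b)%:R + l * ((t %/ b) * n)%N%:R in
        (x = (if neg then - X else X)) /\ y = Y].

Definition Ht (t : nat) : nat :=
  \sum_(1 <= x < t.+1) \sum_(1 <= y < x.+1 | coprime x y) ((t %/ x) * x)%N.

(* Main.v *)
Set Warnings "-all".
Require Import Defs.
From HB Require Import structures.
From mathcomp Require Import all_boot all_order all_algebra.
From mathcomp Require Import reals exp.
From mathcomp Require Import zify ring lra.
Set Implicit Arguments. Unset Strict Implicit. Unset Printing Implicit Defensive.
Import Order.TTheory GRing.Theory Num.Theory.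

Local Close Scope ring_scope.

Definition cnt (P : seq nat) (N : nat) : nat :=
  \sum_(1 <= a < N.+1) (all (fun p => ~~ (p %| a)) P : nat).

Lemma cnt0 P : cnt P 0 = 0.
Proof. by rewrite /cnt big_geq. Qed.

Lemma cntS P N : cnt P N.+1 = cnt P N + (all (fun p => ~~ (p %| N.+1)) P : nat).
Proof. by rewrite /cnt big_nat_recr. Qed.

Lemma all_mul p P c : prime p -> p \notin P -> all prime P ->
  all (fun q => ~~ (q %| p * c)) P = all (fun q => ~~ (q %| c)) P.
Proof.
move=> pp pP aP; apply: eq_in_all => q qP.
have qp : prime q by move/allP: aP => /(_ q qP).
rewrite Euclid_dvdM // dvdn_prime2 //.
case: eqP => [eqqp|] //; by move: pP; rewrite -eqqp qP.
Qed.

Lemma cnt_cons p P N : prime p -> p \notin P -> all prime P ->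
  cnt (p :: P) N + cnt P (N %/ p) = cnt P N.
Proof.
move=> pp pP aP; have p0 := prime_gt0 pp.
elim: N => [|N IH]; first by rewrite div0n !cnt0.
rewrite !cntS divnS //.
case: (boolP (p %| N.+1)) => [/dvdnP [c Hc]|ndv] /=.
  rewrite add1n cntS -IH.
  have -> : (N %/ p).+1 = c.
    have := divnS N p0; rewrite Hc dvdn_mull // add1n => <-.
    by rewrite mulnK.
  rewrite Hc mulnC dvdn_mulr // /= all_mul // ; lia.
rewrite add0n; lia.
Qed.

Local Open Scope ring_scope.

Definition Pi (R : realFieldType) (P : seq nat) : R := \prod_(p <- P) (1 - (p%:R)^-1).

Lemma Pi_ge0_le1 (R : realFieldType) P : all prime P -> 0 <= Pi R P <= 1.
Proof.
elim: P => [|p P IH] /=; first by rewrite /Pi big_nil ler01 lexx.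
move=> /andP[pp aP]; have /andP[h0 h1] := IH aP.
rewrite /Pi big_cons -/(Pi R P).
have p1 : (1 < p)%N := prime_gt1 pp.
have hp : 1 < (p%:R : R) by rewrite ltr1n.
have hi : 0 < (p%:R : R)^-1 by rewrite invr_gt0; lra.
have hi1 : (p%:R : R)^-1 < 1 by rewrite invf_lt1; lra.
apply/andP; split; first by apply: mulr_ge0; lra.
by nra.
Qed.

Lemma divn_real (R : realFieldType) N p : (0 < p)%N ->
  ((N %/ p)%N%:R : R) <= (N%:R / p%:R : R) < ((N %/ p)%N%:R : R) + 1.
Proof.
move=> p0; have hp : 0 < (p%:R : R) by rewrite ltr0n.
rewrite ler_pdivlMr // ltr_pdivrMr //.
have e := divn_eq N p; have m := ltn_pmod N p0.
have -> : (N%:R : R) = (N %/ p)%N%:R * p%:R + (N %% p)%:R by rewrite {1}e natrD natrM.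
have : ((N %% p)%:R : R) < p%:R by rewrite ltr_nat.
have : (0 : R) <= (N %% p)%:R by [].
move=> a b; apply/andP; split; nra.
Qed.

Lemma cnt_bound (R : realFieldType) P N : uniq P -> all prime P ->
  `|(cnt P N)%:R - N%:R * Pi R P| <= (2 ^ size P)%:R - 1.
Proof.
elim: P N => [|p P IH] N.
  move=> _ _; rewrite /Pi big_nil /cnt /=.
  have -> : \sum_(1 <= a < N.+1) (true : nat) = N.
    by rewrite sum_nat_const_nat muln1 subn1.
  by rewrite mulr1 subrr normr0 expn0 subrr.
move=> /= /andP[pP uP] /andP[pp aP].
have p0 := prime_gt0 pp.
have e := cnt_cons N pp pP aP.
have -> : ((cnt (p :: P) N)%:R : R) = (cnt P N)%:R - (cnt P (N %/ p)%N)%:R.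
  by rewrite -e natrD addrK.
rewrite /Pi big_cons -/(Pi R P).
have h1 := IH N uP aP; have h2 := IH (N %/ p)%N uP aP.
have /andP[d1 d2] := divn_real R N p0.
have /andP[q0 q1] := Pi_ge0_le1 R aP.
rewrite expnS natrM.
have hp : 0 < (p%:R : R) by rewrite ltr0n.
move: h1 h2 d1 d2 q0 q1 hp; clear e IH.
move: ((cnt P N)%:R : R) ((cnt P (N %/ p)%N)%:R : R) (Pi R P) ((2 ^ size P)%:R : R)
  (N%:R : R) ((N %/ p)%N%:R : R) (p%:R : R) => A B Q K X Y Z h1 h2 d1 d2 q0 q1 hp.
have -> : A - B - X * ((1 - Z^-1) * Q) =
    (A - X * Q) - (B - Y * Q) + (X / Z - Y) * Q.
  by field; lra.
have h3 : 0 <= (X / Z - Y) * Q <= 1 by apply/andP; split; nra.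
rewrite (le_trans (ler_normD _ _)) // (le_trans (lerD (ler_normB _ _) (lexx _))) //.
rewrite [`|(X / Z - Y) * Q|]ger0_norm; [|lra].
have -> : (2%:R : R) = 1 + 1 by [].
lra.
Qed.

Local Open Scope ring_scope.

Lemma prime_dvd_prod p P : prime p -> all prime P ->
  (p %| \prod_(q <- P) q)%N -> p \in P.
Proof.
move=> pp; elim: P => [|q P IH] /=.
  by rewrite big_nil dvdn1 => _ /eqP p1; move: (prime_gt1 pp); rewrite p1.
move=> /andP[qp aP]; rewrite big_cons Euclid_dvdM // dvdn_prime2 // in_cons.
by case/orP=> [->//|/IH ->]; rewrite ?orbT.
Qed.

Lemma prod_dvd P N : uniq P -> all prime P -> all (fun p => p %| N)%N P ->
  (\prod_(p <- P) p %| N)%N.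
Proof.
elim: P => [|p P IH] /=; first by rewrite big_nil dvd1n.
move=> /andP[pP uP] /andP[pp aP] /andP[pN aN].
rewrite big_cons Gauss_dvd ?pN ?IH //.
rewrite prime_coprime //; apply/negP => /(prime_dvd_prod pp aP) pin.
by rewrite pin in pP.
Qed.

Lemma prod_gt0 P : all prime P -> (0 < \prod_(p <- P) p)%N.
Proof.
elim: P => [|p P IH] /=; first by rewrite big_nil.
by move=> /andP[pp aP]; rewrite big_cons muln_gt0 prime_gt0 // IH.
Qed.

Lemma cnt_exact (R : realFieldType) P N : uniq P -> all prime P ->
  (\prod_(p <- P) p %| N)%N -> ((cnt P N)%:R : R) = N%:R * Pi R P.
Proof.
elim: P N => [|p P IH] N.
  move=> _ _ _; rewrite /Pi big_nil /cnt /=.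
  by rewrite sum_nat_const_nat muln1 subn1 mulr1.
move=> /= /andP[pP uP] /andP[pp aP]; rewrite big_cons => dv.
have p0 := prime_gt0 pp.
have e := cnt_cons N pp pP aP.
have pN : (p %| N)%N by apply: dvdn_trans dv; apply: dvdn_mulr.
have QN : (\prod_(q <- P) q %| N %/ p)%N.
  by rewrite dvdn_divRL // mulnC.
have -> : ((cnt (p :: P) N)%:R : R) = (cnt P N)%:R - (cnt P (N %/ p)%N)%:R.
  by rewrite -e natrD addrK.
rewrite (IH N uP aP) ?(dvdn_trans _ dv) ?dvdn_mull // (IH _ uP aP QN).
rewrite /Pi big_cons -/(Pi R P).
have hp : (p%:R : R) != 0 by rewrite pnatr_eq0 -lt0n.
have -> : ((N %/ p)%N%:R : R) = N%:R / p%:R.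
  by rewrite natr_div // unitfE.
move: hp; clear; move: (N%:R : R) (p%:R : R) (Pi R P) => X Z Q hp.
by field.
Qed.

Definition F (b k : nat) : nat := \sum_(1 <= a < k.+1) (coprime a b : nat).
Definition S (b k : nat) : nat := \sum_(1 <= a < k.+1) (coprime a b * a)%N.

Lemma coprime_all a b : (0 < a)%N -> (0 < b)%N ->
  coprime a b = all (fun p => ~~ (p %| a))%N (primes b).
Proof.
move=> a0 b0; rewrite coprime_has_primes // -all_predC.
apply: eq_in_all => p; rewrite mem_primes => /and3P[pp _ _] /=.
by rewrite mem_primes pp a0.
Qed.

Lemma F_cnt b k : (0 < b)%N -> F b k = cnt (primes b) k.
Proof.
move=> b0; rewrite /F /cnt; apply: eq_big_nat => a /andP[a0 _].
by rewrite coprime_all.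
Qed.

Lemma primes_prod_dvd b : (0 < b)%N -> (\prod_(p <- primes b) p %| b)%N.
Proof.
move=> b0; apply: prod_dvd; first exact: primes_uniq.
  by apply/allP => p; rewrite mem_primes => /and3P[].
by apply/allP => p; rewrite mem_primes => /and3P[].
Qed.

Lemma primes_all b : all prime (primes b).
Proof. by apply/allP => p; rewrite mem_primes => /and3P[]. Qed.

Lemma F_self (R : realFieldType) b : (0 < b)%N ->
  ((F b b)%:R : R) = b%:R * Pi R (primes b).
Proof.
move=> b0; rewrite F_cnt // cnt_exact //; first exact: primes_uniq.
  exact: primes_all.
exact: primes_prod_dvd.
Qed.

Lemma F_disc (R : realFieldType) b k : (0 < b)%N ->
  `|(F b k)%:R - k%:R * Pi R (primes b)| <= (2 ^ size (primes b))%:R - 1 :> R.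
Proof.
move=> b0; rewrite F_cnt //; apply: cnt_bound; first exact: primes_uniq.
exact: primes_all.
Qed.

Local Close Scope ring_scope.

Lemma FS b k : F b k.+1 = F b k + coprime k.+1 b.
Proof. by rewrite /F big_nat_recr. Qed.
Lemma SS b k : S b k.+1 = S b k + coprime k.+1 b * k.+1.
Proof. by rewrite /S big_nat_recr. Qed.
Lemma F0 b : F b 0 = 0. Proof. by rewrite /F big_geq. Qed.
Lemma S0 b : S b 0 = 0. Proof. by rewrite /S big_geq. Qed.

Lemma coprimeDb i b : coprime (i + b) b = coprime i b.
Proof. by rewrite /coprime gcdnC gcdnDr gcdnC. Qed.

Lemma F_period b k : F b (k + b) = F b k + F b b.
Proof.
rewrite [RHS]addnC /F (@big_cat_nat _ _ _ b.+1) //; last by lia.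
congr addn.
rewrite -{1}(add1n b) big_addn.
have -> : ((k + b).+1 - b = k.+1)%N by lia.
by apply: eq_bigr => i _; rewrite coprimeDb.
Qed.

Lemma coprimeBb a b : (a < b)%N -> coprime (b - a) b = coprime a b.
Proof.
move=> ab; rewrite /coprime.
have e : b = (b - a) + a by lia.
have h1 : gcdn (b - a) b = gcdn (b - a) a by rewrite {2}e gcdnDl.
have h2 : gcdn a b = gcdn a (b - a) by rewrite {1}e gcdnDr.
by rewrite h1 h2 gcdnC.
Qed.

Lemma S_sym b : (0 < b)%N -> 2 * S b b = b * F b b + (b == 1%N).
Proof.
move=> b0; case: (eqVneq b 1%N) => [->|bne]; first by rewrite /S /F !big_nat1.
have b1 : (1 < b)%N by lia.
have cb : coprime b b = false by rewrite /coprime gcdnn; apply/negbTE; lia.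
rewrite /S /F !big_nat_recr //= cb /= mul0n !addn0.
rewrite ?addn0 mul2n -addnn {2}big_nat_rev /= add1n.
rewrite -big_split /= big_distrr /=; apply: eq_big_nat => i /andP[i1 ib].
have -> : (b.+1 - i.+1 = b - i)%N by lia.
rewrite coprimeBb //; case: (coprime i b) => /=; lia.
Qed.

Lemma abel b m : S b m + \sum_(0 <= k < m) F b k = m * F b m.
Proof.
elim: m => [|m IH]; first by rewrite S0 big_geq.
rewrite SS FS big_nat_recr //=.
have : S b m + \sum_(0 <= k < m) F b k = m * F b m := IH.
case: (coprime m.+1 b) => /=; lia.
Qed.

Lemma sum_iota2 m : 2 * \sum_(0 <= k < m) k = m * m.-1.
Proof.
elim: m => [|m IH]; first by rewrite big_geq.
rewrite big_nat_recr //= mulnDr IH; case: m {IH} => //= m; lia.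
Qed.

Local Open Scope ring_scope.

Definition Pb (R : realFieldType) b : R := Pi R (primes b).
Definition Db (R : realFieldType) b : R := (2 ^ size (primes b))%:R.
Definition rr (R : realFieldType) b k : R := (F b k)%:R - k%:R * Pb R b.
Definition Rs (R : realFieldType) b m : R := \sum_(0 <= k < m) rr R b k.

Lemma Pb01 (R : realFieldType) b : 0 <= Pb R b <= 1.
Proof. apply: Pi_ge0_le1; exact: primes_all. Qed.

Lemma Db_ge1 (R : realFieldType) b : 1 <= Db R b.
Proof. by rewrite /Db ler1n expn_gt0. Qed.

Lemma rr_bound (R : realFieldType) b k : (0 < b)%N -> `|rr R b k| <= Db R b.
Proof.
move=> b0; rewrite /rr /Pb /Db; apply: le_trans (F_disc R k b0) _; lra.
Qed.

Lemma rr_period (R : realFieldType) b k : (0 < b)%N -> rr R b (k + b) = rr R b k.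
Proof.
move=> b0; rewrite /rr F_period natrD F_self // natrD -/(Pb R b).
by rewrite mulrDl; ring.
Qed.

Lemma Rs_add (R : realFieldType) b m : (0 < b)%N -> Rs R b (m + b) = Rs R b m + Rs R b b.
Proof.
move=> b0; rewrite /Rs (@big_cat_nat _ _ _ b) //=; last by lia.
rewrite addrC; congr (_ + _).
rewrite -{1}(add0n b) big_addn.
have -> : (m + b - b = m)%N by lia.
by apply: eq_bigr => i _; rewrite rr_period.
Qed.

Lemma Rs_q (R : realFieldType) b q rho : (0 < b)%N ->
  Rs R b (q * b + rho) = q%:R * Rs R b b + Rs R b rho.
Proof.
move=> b0; elim: q => [|q IH]; first by rewrite mul0n add0n mul0r add0r.
have -> : (q.+1 * b + rho = (q * b + rho) + b)%N by rewrite mulSn; lia.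
by rewrite Rs_add // IH mulrSr; ring.
Qed.

Lemma Rs_small (R : realFieldType) b rho : (0 < b)%N ->
  `|Rs R b rho| <= rho%:R * Db R b.
Proof.
move=> b0; elim: rho => [|k IH]; first by rewrite /Rs big_geq // normr0 mul0r.
rewrite /Rs big_nat_recr //= -/(Rs R b k).
apply: le_trans (ler_normD _ _) _.
have := rr_bound R k b0; rewrite mulrSr mulrDl mul1r; lra.
Qed.

Lemma Rs_bound (R : realFieldType) b m : (0 < b)%N ->
  `|Rs R b m - m%:R / b%:R * Rs R b b| <= 2 * b%:R * Db R b.
Proof.
move=> b0; have hb : 0 < (b%:R : R) by rewrite ltr0n.
rewrite {1}(divn_eq m b) Rs_q //.
have mm : (m%:R : R) = (m %/ b)%N%:R * b%:R + (m %% b)%N%:R by rewrite {1}(divn_eq m b) natrD natrM.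
have rb : ((m %% b)%N%:R : R) <= b%:R by rewrite ler_nat ltnW // ltn_mod.
have h1 := Rs_small R (m %% b)%N b0.
have h2 := Rs_small R b b0.
have hD := Db_ge1 R b.
rewrite mm.
have -> : (m %/ b)%N%:R * Rs R b b + Rs R b (m %% b)%N -
    ((m %/ b)%N%:R * b%:R + (m %% b)%N%:R) / b%:R * Rs R b b =
    Rs R b (m %% b)%N - (m %% b)%N%:R / b%:R * Rs R b b.
  by field; lra.
apply: le_trans (ler_normB _ _) _.
rewrite normrM ger0_norm; last by apply: divr_ge0.
have : (m %% b)%N%:R / b%:R * `|Rs R b b| <= b%:R * Db R b.
  rewrite mulrAC ler_pdivrMr //.
  have : (0 : R) <= (m %% b)%N%:R by [].
  have := normr_ge0 (Rs R b b).
  move: h2 rb hD hb; move: (`|Rs R b b|) ((m %% b)%N%:R : R) (b%:R : R) (Db R b) => X Y Z W.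
  clear; nra.
move: h1 rb hD hb; move: (`|Rs R b (m %% b)%N|) ((m %% b)%N%:R : R) (b%:R : R) (Db R b) => X Y Z W.
clear; nra.
Qed.

Local Open Scope ring_scope.

Lemma sumF_real (R : realFieldType) b m :
  (S b m)%:R + \sum_(0 <= k < m) ((F b k)%:R : R) = m%:R * (F b m)%:R.
Proof. by rewrite -natr_sum -natrD abel natrM. Qed.

Lemma sumk_real (R : realFieldType) m :
  2 * \sum_(0 <= k < m) (k%:R : R) = m%:R * (m%:R - 1).
Proof.
case: m => [|m]; first by rewrite big_geq // mulr0 mul0r.
rewrite -natr_sum -[2]/(2%:R) -natrM sum_iota2 /= natrM -[m.+1]addn1 natrD.
by rewrite addrK.
Qed.

Lemma Rs_split (R : realFieldType) b m :
  Rs R b m = \sum_(0 <= k < m) ((F b k)%:R : R) - (\sum_(0 <= k < m) (k%:R : R)) * Pb R b.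
Proof. by rewrite /Rs /rr sumrB mulr_suml. Qed.

Lemma Rs_b (R : realFieldType) b : (0 < b)%N ->
  Rs R b b = ((F b b)%:R - (b == 1%N)%:R) / 2.
Proof.
move=> b0; rewrite Rs_split.
have e1 := sumF_real R b b.
have e2 : 2 * ((S b b)%:R : R) = b%:R * (F b b)%:R + (b == 1%N)%:R.
  by rewrite -[2]/(2%:R) -natrM S_sym // natrD natrM.
have e3 := sumk_real R b.
have e4 := F_self R b0; rewrite -/(Pb R b) in e4.
move: e1 e2 e3 e4.
move: (\sum_(0 <= k < b) ((F b k)%:R : R)) (\sum_(0 <= k < b) (k%:R : R))
  ((S b b)%:R : R) ((F b b)%:R : R) (b%:R : R) ((b == 1%N)%:R : R) (Pb R b)
  => SF SK SS FF B I P e1 e2 e3 e4.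
rewrite e4 in e1 e2 *.
have h : SF - SK * P = (B * (B * P) - SS) - SK * P by rewrite -e1; ring.
rewrite h.
have -> : SS = (B * (B * P) + I) / 2 by rewrite -e2; field.
have -> : SK = B * (B - 1) / 2 by rewrite -e3; field.
by field.
Qed.

Lemma claimA (R : realFieldType) b m (M : R) : (0 < b)%N ->
  m%:R <= M <= m%:R + 1 ->
  `|(F b m)%:R - M * Pb R b| <= Db R b + 1.
Proof.
move=> b0 /andP[h1 h2].
have := rr_bound R m b0; rewrite /rr ler_norml => /andP[r1 r2].
have /andP[p0 p1] := Pb01 R b.
rewrite ler_norml; move: r1 r2 p0 p1 h1 h2.
move: ((F b m)%:R : R) (m%:R : R) (Pb R b) (Db R b) => X Y P D; clear.
move=> *; apply/andP; split; nra.
Qed.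

Lemma prod_helper (R : realFieldType) (d r D P : R) : 0 <= d <= 1 -> - D <= r <= D ->
  0 <= P <= 1 -> [/\ - D <= d * r, d * r <= D, 0 <= d ^+ 2 * P / 2 & d ^+ 2 * P / 2 <= 1 / 2].
Proof.
move=> /andP[d0 d1] /andP[r0 r1] /andP[p0 p1].
have s0 : 0 <= d ^+ 2 by rewrite exprn_ge0.
have s1 : d ^+ 2 <= 1 by rewrite expr_le1.
split; nra.
Qed.

Lemma claimB (R : realFieldType) b m (M : R) : (0 < b)%N ->
  m%:R <= M <= m%:R + 1 ->
  `|(M * (F b m)%:R - (S b m)%:R) - (M ^+ 2 * Pb R b / 2 - (b == 1%N)%:R * M / 2)|
    <= 3 * b%:R * (Db R b + 1).
Proof.
move=> b0 /andP[h1 h2].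
have := rr_bound R m b0; rewrite /rr ler_norml => /andP[r1 r2].
have /andP[p0 p1] := Pb01 R b.
have e1 := sumF_real R b m.
have e3 := sumk_real R m.
have e5 := Rs_split R b m.
have e6 := Rs_bound R m b0; rewrite Rs_b // ler_norml in e6.
move/andP: e6 => [e6 e7].
have e4 := F_self R b0; rewrite -/(Pb R b) in e4.
have hb : 1 <= (b%:R : R) by rewrite ler1n.
have hD := Db_ge1 R b.
case: (eqVneq b 1%N) => [b1|bn1].
  subst b; rewrite eqxx /= in e4 e6 e7 *.
  move: r1 r2 p0 p1 h1 h2 e1 e3 e5 e6 e7 e4 hb hD.
  move: ((F 1 m)%:R : R) (m%:R : R) (Pb R 1) (Db R 1) (S 1 m)%:R (Rs R 1 m)
    (\sum_(0 <= k < m) ((F 1 k)%:R : R)) (\sum_(0 <= k < m) (k%:R : R)) ((F 1 1)%:R : R)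
    => X Y P D SS RS SF SK FF; clear.
  move=> r1 r2 p0 p1 h1 h2 e1 e3 e5 e6 e7 e4 hb hD.
  rewrite mul1r in e4; subst FF.
  rewrite divr1 in e6 e7.
  have key : M * X - SS - (M ^+ 2 * P / 2 - 1 * M / 2) =
      (M - Y) * (X - Y * P) + (RS - Y * ((P - 1) / 2)) - (M - Y) ^+ 2 * P / 2 + (M - Y) / 2.
    have : SS = Y * X - SF by rewrite -e1; ring.
    move=> ->; rewrite e5.
    have -> : SK = Y * (Y - 1) / 2 by rewrite -e3; field.
    by field.
  have hd : 0 <= M - Y <= 1 by apply/andP; split; lra.
  have hr : - D <= X - Y * P <= D by apply/andP; split; lra.
  have hp : 0 <= P <= 1 by apply/andP.
  have [q1 q2 q3 q4] := prod_helper hd hr hp.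
  rewrite key ler_norml; apply/andP; split; rewrite /= in e6 e7; lra.
have i0 : (b == 1%N)%:R = 0 :> R by rewrite (negbTE bn1).
rewrite i0 in e6 e7 *.
move: r1 r2 p0 p1 h1 h2 e1 e3 e5 e6 e7 e4 hb hD.
move: ((F b m)%:R : R) (m%:R : R) (Pb R b) (Db R b) (S b m)%:R (Rs R b m)
  (\sum_(0 <= k < m) ((F b k)%:R : R)) (\sum_(0 <= k < m) (k%:R : R)) ((F b b)%:R : R)
  (b%:R : R) => X Y P D SS RS SF SK FF B; clear.
move=> r1 r2 p0 p1 h1 h2 e1 e3 e5 e6 e7 e4 hb hD.
subst FF.
have bn0 : B != 0 by apply/eqP => b0; rewrite b0 in hb; lra.
have key : M * X - SS - (M ^+ 2 * P / 2 - 0 * M / 2) =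
    (M - Y) * (X - Y * P) + (RS - Y / B * ((B * P - 0) / 2)) - (M - Y) ^+ 2 * P / 2.
  have : SS = Y * X - SF by rewrite -e1; ring.
  move=> ->; rewrite e5.
  have -> : SK = Y * (Y - 1) / 2 by rewrite -e3; field.
  by field.
have hd : 0 <= M - Y <= 1 by apply/andP; split; lra.
have hr : - D <= X - Y * P <= D by apply/andP; split; lra.
have hp : 0 <= P <= 1 by apply/andP.
have [q1 q2 q3 q4] := prod_helper hd hr hp.
have : 0 <= D by lra.
move=> D0; have : 0 <= B * D by apply: mulr_ge0; lra.
move=> BD0; have BD1 : D <= B * D by nra.
rewrite key ler_norml; apply/andP; split; lra.
Qed.

Local Close Scope ring_scope.

Lemma cut_sum (f : nat -> nat) (P : pred nat) N m : m <= N ->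
  \sum_(1 <= a < N.+1 | P a && (a <= m)) f a = \sum_(1 <= a < m.+1 | P a) f a.
Proof.
move=> mN; rewrite (@big_cat_nat _ _ _ m.+1) //=.
rewrite [X in _ + X]big1_seq ?addn0; last first.
  by move=> i /andP[/andP[_ im]]; rewrite mem_index_iota; lia.
rewrite big_nat_cond [RHS]big_nat_cond; apply: eq_bigl => i.
case: (P i); rewrite ?andbF ?andbT //=.
case: (leqP i m) => [im|im]; rewrite ?andbT ?andbF //=; lia.
Qed.

Definition mm (n b beta : nat) := (n * beta).-1 %/ b.

Lemma cond_m n b beta a : 0 < b -> 0 < n -> 0 < beta ->
  (a * b < n * beta) = (a <= mm n b beta).
Proof.
move=> b0 n0 be0; rewrite /mm leq_divRL //.
have : 0 < n * beta by rewrite muln_gt0 n0.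
lia.
Qed.

Lemma mm_le n b beta t : 0 < b -> beta <= t -> mm n b beta <= n * t.
Proof.
move=> b0 bt; rewrite /mm; apply: leq_trans (leq_div _ _) _.
apply: leq_trans (leq_pred _) _; exact: leq_mul.
Qed.

Lemma Sx_eq t n b : 0 < b -> 0 < n ->
  Sx t n b = \sum_(1 <= beta < t.+1) ((t %/ beta) * beta * F beta (mm n b beta)).
Proof.
move=> b0 n0; rewrite /Sx; apply: eq_big_nat => beta /andP[be0 bet].
have bet' : beta <= t by lia.
rewrite /inSt.
have -> : \sum_(1 <= n' < (n * t).+1 | ((0 < beta <= t) && coprime n' beta) && (n' * b < n * beta))
    (t %/ beta * beta) = \sum_(1 <= n' < (n * t).+1 | coprime n' beta && (n' <= mm n b beta))
    (t %/ beta * beta).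
  apply: eq_bigl => a; rewrite be0 bet' /= cond_m //.
rewrite cut_sum ?mm_le // /F big_mkcond big_distrr /=.
by apply: eq_bigr => i _; case: (coprime i beta); rewrite ?muln1 ?muln0.
Qed.

Lemma Sy_eq t n b : 0 < b -> 0 < n ->
  Sy t n b = \sum_(1 <= beta < t.+1) ((t %/ beta) * S beta (mm n b beta)).
Proof.
move=> b0 n0; rewrite /Sy; apply: eq_big_nat => beta /andP[be0 bet].
have bet' : beta <= t by lia.
rewrite /inSt.
have -> : \sum_(1 <= n' < (n * t).+1 | ((0 < beta <= t) && coprime n' beta) && (n' * b < n * beta))
    (t %/ beta * n') = \sum_(1 <= n' < (n * t).+1 | coprime n' beta && (n' <= mm n b beta))
    (t %/ beta * n').
  apply: eq_bigl => a; rewrite be0 bet' /= cond_m //.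
rewrite cut_sum ?mm_le // /S big_mkcond big_distrr /=.
by apply: eq_bigr => i _; case: (coprime i beta); rewrite ?mul1n ?mul0n ?muln0.
Qed.

Lemma Ht_eq t : Ht t = \sum_(1 <= beta < t.+1) ((t %/ beta) * beta * F beta beta).
Proof.
rewrite /Ht; apply: eq_bigr => x _.
rewrite /F big_mkcond big_distrr /=; apply: eq_bigr => i _.
by rewrite coprime_sym; case: (coprime i x); rewrite ?muln1 ?muln0.
Qed.

Local Open Scope ring_scope.
Lemma mm_real (R : realFieldType) n b beta : (0 < b)%N -> (0 < n)%N -> (0 < beta)%N ->
  ((mm n b beta)%:R : R) <= ((n * beta)%N%:R / b%:R : R) <= ((mm n b beta)%:R : R) + 1.
Proof.
move=> b0 n0 be0.
have hb : (0 : R) < b%:R by rewrite ltr0n.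
have nb : (0 < n * beta)%N by rewrite muln_gt0 n0.
rewrite ler_pdivlMr // ler_pdivrMr //; apply/andP; split.
  rewrite -natrM ler_nat /mm; apply: leq_trans (leq_trunc_div _ _) _; lia.
rewrite -[1]/(1%:R) -natrD -natrM ler_nat addn1.
have := ltn_ceil (n * beta).-1 b0; rewrite -/(mm n b beta); lia.
Qed.

Local Open Scope ring_scope.

Definition Wt (t beta : nat) : nat := (t %/ beta * beta)%N.
Definition KK (R : realFieldType) (t : nat) : R :=
  \sum_(1 <= beta < t.+1) ((Wt t beta)%:R * (Db R beta + 1)).

Lemma a_bound (R : realFieldType) t n b beta : (0 < b)%N -> (0 < n)%N -> (0 < beta)%N ->
  `|((Wt t beta * F beta (mm n b beta))%N%:R : R) - n%:R / b%:R * (Wt t beta * F beta beta)%N%:R|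
   <= (Wt t beta)%:R * (Db R beta + 1).
Proof.
move=> b0 n0 be0.
have hA := claimA (m := mm n b beta) (M := (n * beta)%N%:R / b%:R) be0 (mm_real R b0 n0 be0).
have e4 := F_self R be0; rewrite -/(Pb R beta) in e4.
rewrite !(natrM R (Wt t beta)) e4.
have -> : ((n%:R : R) / b%:R * ((Wt t beta)%:R * (beta%:R * Pb R beta))) =
   (Wt t beta)%:R * ((n * beta)%N%:R / b%:R * Pb R beta).
  by rewrite natrM; ring.
by rewrite -mulrBr normrM ger0_norm // ler_wpM2l.
Qed.

Lemma c_bound (R : realFieldType) t n b beta : (0 < b)%N -> (0 < n)%N -> (0 < beta)%N ->
  `|((t %/ beta * S beta (mm n b beta))%N%:R : R)
     - n%:R / b%:R * (Wt t beta * F beta (mm n b beta))%N%:R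
     + (n%:R / b%:R) ^+ 2 / 2 * (Wt t beta * F beta beta)%N%:R
     - (beta == 1%N)%:R * t%:R * (n%:R / b%:R) / 2|
   <= 3 * (Wt t beta)%:R * (Db R beta + 1).
Proof.
move=> b0 n0 be0.
have hB := claimB (m := mm n b beta) (M := (n * beta)%N%:R / b%:R) be0 (mm_real R b0 n0 be0).
have e4 := F_self R be0; rewrite -/(Pb R beta) in e4.
have hb : (b%:R : R) != 0 by rewrite pnatr_eq0 -lt0n.
have key : ((t %/ beta * S beta (mm n b beta))%N%:R : R)
     - n%:R / b%:R * (Wt t beta * F beta (mm n b beta))%N%:R
     + (n%:R / b%:R) ^+ 2 / 2 * (Wt t beta * F beta beta)%N%:R
     - (beta == 1%N)%:R * t%:R * (n%:R / b%:R) / 2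
   = - ((t %/ beta)%N%:R * ((((n * beta)%N%:R / b%:R) * (F beta (mm n b beta))%:R
        - (S beta (mm n b beta))%:R) - ((((n * beta)%N%:R / b%:R)) ^+ 2 * Pb R beta / 2
        - (beta == 1%N)%:R * ((n * beta)%N%:R / b%:R) / 2))).
  rewrite !(natrM R (Wt t beta)) e4 /Wt !(natrM R (t %/ beta)) !(natrM R n).
  case: (eqVneq beta 1%N) => [->|bn]; last first.
    have -> : (false%:R : R) = 0 by [].
    by field.
  have -> : (true%:R : R) = 1 by [].
  rewrite divn1; by field.
rewrite key normrN normrM ger0_norm //.
apply: le_trans (ler_wpM2l _ hB) _ => //.
rewrite le_eqVlt; apply/orP; left; apply/eqP; rewrite /Wt natrM; ring.
Qed.

Lemma sum_norm_bound (R : realFieldType) t (f g : nat -> R) :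
  (forall beta, (0 < beta)%N -> `|f beta| <= g beta) ->
  `|\sum_(1 <= beta < t.+1) f beta| <= \sum_(1 <= beta < t.+1) g beta.
Proof.
move=> h; apply: le_trans (ler_norm_sum _ _ _) _.
by apply: ler_sum_nat => i /andP[i1 _]; apply: h.
Qed.

Lemma X_approx (R : realFieldType) t n b : (0 < b)%N -> (0 < n)%N ->
  `|((Sx t n b)%:R : R) - n%:R / b%:R * (Ht t)%:R| <= KK R t.
Proof.
move=> b0 n0; rewrite Sx_eq // Ht_eq !natr_sum mulr_sumr -sumrB /KK.
apply: sum_norm_bound => beta be0.
exact: (a_bound R t b0 n0 be0).
Qed.

Lemma sum_ind1 (R : realFieldType) t (c : R) : (0 < t)%N ->
  \sum_(1 <= beta < t.+1) ((beta == 1%N)%:R * c) = c.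
Proof.
move=> t0; rewrite big_ltn // eqxx mul1r big1_seq ?addr0 //.
move=> i /andP[_]; rewrite mem_index_iota => /andP[i2 _].
have -> : (i == 1%N) = false by apply/negbTE; lia.
by rewrite /= mul0r.
Qed.

Lemma Y_approx (R : realFieldType) t n b : (0 < b)%N -> (0 < n)%N -> (0 < t)%N ->
  `|((Sy t n b)%:R : R) - n%:R / b%:R * (Sx t n b)%:R
     + (n%:R / b%:R) ^+ 2 / 2 * (Ht t)%:R - t%:R * (n%:R / b%:R) / 2| <= 3 * KK R t.
Proof.
move=> b0 n0 t0.
have -> : (t%:R : R) * (n%:R / b%:R) / 2 =
   \sum_(1 <= beta < t.+1) ((beta == 1%N)%:R * (t%:R * (n%:R / b%:R) / 2)).
  by rewrite sum_ind1.
rewrite Sy_eq // Sx_eq // Ht_eq !natr_sum !mulr_sumr -sumrB -big_split -sumrB.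
apply: sum_norm_bound => beta be0.
move: (c_bound R t b0 n0 be0); rewrite /Wt /= => h.
rewrite (_ : (beta == 1%N)%:R * (t%:R * (n%:R / b%:R) / 2) =
   (beta == 1%N)%:R * t%:R * (n%:R / b%:R) / 2 :> R); last by rewrite !mulrA.
by move: h; rewrite ?mulrA.
Qed.

Local Open Scope ring_scope.

Lemma KK_ge0 (R : realFieldType) t : 0 <= KK R t.
Proof.
rewrite /KK; apply: sumr_ge0 => i _; apply: mulr_ge0 => //.
have := Db_ge1 R i; lra.
Qed.

Lemma alg_final (R : realFieldType) (y x0 s H K T : R) :
  0 < H -> 0 <= T -> `|x0 - s * H| <= K + T -> `|y - s * x0 + s ^+ 2 / 2 * H - T * s / 2| <= 3 * K ->
  0 <= K ->
  `|y - (T / 2 + x0) ^+ 2 / (2 * H)| <= 3 * K + (K + 2 * T) ^+ 2 / (2 * H).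
Proof.
move=> H0 T0; set e1 := x0 - s * H; set e2 := y - s * x0 + s ^+ 2 / 2 * H - T * s / 2.
move=> h1 h2 K0.
have key : y - (T / 2 + x0) ^+ 2 / (2 * H) = e2 - (T / 2 + e1) ^+ 2 / (2 * H).
  rewrite /e1 /e2; field; lra.
rewrite key; apply: le_trans (ler_normB _ _) _; apply: lerD => //.
rewrite ger0_norm; last by apply: divr_ge0; [exact: sqr_ge0 | lra].
rewrite ler_pM2r; last by rewrite invr_gt0; lra.
move: h1; rewrite ler_norml => /andP[a1 a2].
have q1 : - (K + 2 * T) <= T / 2 + e1 by lra.
have q2 : T / 2 + e1 <= K + 2 * T by lra.
rewrite !expr2; nra.
Qed.

Local Close Scope ring_scope.

Fixpoint subprods (P : seq nat) : seq nat :=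
  if P is p :: P' then subprods P' ++ map (muln p) (subprods P') else [:: 1].

Lemma size_subprods P : size (subprods P) = 2 ^ size P.
Proof. by elim: P => //= p P IH; rewrite size_cat size_map IH expnS mul2n addnn. Qed.

Lemma subprods_dvd P d : d \in subprods P -> d %| \prod_(p <- P) p.
Proof.
elim: P d => [|p P IH] d /=; first by rewrite inE => /eqP ->; rewrite big_nil.
rewrite mem_cat big_cons => /orP[/IH h|/mapP[e /IH h ->]].
  by apply: dvdn_trans h _; apply: dvdn_mull.
by rewrite dvdn_mul.
Qed.

Lemma uniq_subprods P : uniq P -> all prime P -> uniq (subprods P).
Proof.
elim: P => [|p P IH] //= /andP[pP uP] /andP[pp aP].
rewrite cat_uniq IH // map_inj_uniq ?IH //; last first.
  move=> x y /eqP; rewrite eqn_mul2l => /orP[/eqP p0|/eqP //].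
  by move: (prime_gt0 pp); rewrite p0.
rewrite andbT; apply/hasPn => x /mapP[e eP ->].
apply/negP => /subprods_dvd h.
have : p %| \prod_(q <- P) q by apply: dvdn_trans h; apply: dvdn_mulr.
by move/(prime_dvd_prod pp aP); rewrite (negbTE pP).
Qed.

Definition tau (t b : nat) : nat := \sum_(1 <= d < t.+1) (d %| b : nat).

Lemma tau_size t b : tau t b = size [seq d <- iota 1 t | d %| b].
Proof.
rewrite size_filter /tau -sum1_count big_mkcond /index_iota subSS subn0 /=.
by rewrite [RHS]big_mkcond; apply: eq_bigr => i _; case: (i %| b).
Qed.

Lemma two_pow_tau t b : 0 < b -> b <= t -> 2 ^ size (primes b) <= tau t b.
Proof.
move=> b0 bt; rewrite -size_subprods tau_size; apply: uniq_leq_size.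
  by apply: uniq_subprods; [exact: primes_uniq | exact: primes_all].
move=> d dP; have h := subprods_dvd dP.
have db : d %| b by apply: dvdn_trans h (primes_prod_dvd b0).
have d0 : 0 < d by apply: dvdn_gt0 db.
rewrite mem_filter db /= mem_iota; have := dvdn_leq b0 db; lia.
Qed.

Lemma sum_dvd d t : 0 < d -> \sum_(1 <= b < t.+1) (d %| b : nat) = t %/ d.
Proof.
move=> d0; elim: t => [|t IH]; first by rewrite big_geq // div0n.
by rewrite big_nat_recr //= IH divnS // addnC.
Qed.

Lemma sum_tau t : \sum_(1 <= b < t.+1) tau t b = \sum_(1 <= d < t.+1) t %/ d.
Proof.
rewrite /tau exchange_big /=; apply: eq_big_nat => d /andP[d0 _].
by rewrite sum_dvd.
Qed.

Local Open Scope ring_scope.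

Lemma ln_step (R : realType) (t : nat) : (0 < t)%N ->
  (t.+1%:R : R)^-1 <= ln (t.+1%:R) - ln t%:R.
Proof.
move=> t0.
have h1 : (0 : R) < t%:R by rewrite ltr0n.
have h2 : (0 : R) < t.+1%:R by rewrite ltr0n.
have e : ln (t%:R : R) - ln t.+1%:R = ln (1 + (- (t.+1%:R)^-1)).
  rewrite -ln_div ?posrE //; congr ln.
  rewrite -[t.+1]addn1 natrD; field; apply: lt0r_neq0; move: h1; clear; lra.
have : - 1 < - (t.+1%:R : R)^-1.
  by rewrite ltrN2 invf_lt1 // ltr1n ltnS.
move/le_ln1Dx; rewrite -e => h; clear t0 e h1 h2.
move: h; move: (ln (t%:R : R)) (ln (t.+1%:R : R)) ((t.+1%:R : R)^-1) => a b c; lra.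
Qed.

Lemma harmonic (R : realType) (t : nat) : (0 < t)%N ->
  \sum_(1 <= d < t.+1) (d%:R : R)^-1 <= 1 + ln t%:R.
Proof.
elim: t => [//|t IH] _.
case: t IH => [|t] IH.
  by rewrite big_nat1 invr1 ln1 addr0.
rewrite big_nat_recr //=.
have := IH isT; have := ln_step R (isT : (0 < t.+1)%N).
move: (\sum_(1 <= i < t.+2) (i%:R : R)^-1) ((t.+2%:R : R)^-1) (ln (t.+2%:R : R)) (ln (t.+1%:R : R)).
move=> a b c d; lra.
Qed.

Lemma sum_div_bound (R : realType) (t : nat) : (0 < t)%N ->
  \sum_(1 <= d < t.+1) ((t %/ d)%:R : R) <= t%:R * (1 + ln t%:R).
Proof.
move=> t0; apply: le_trans (_ : \sum_(1 <= d < t.+1) (t%:R * (d%:R)^-1) <= _).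
  apply: ler_sum_nat => d /andP[d0 _].
  have hd : (0 : R) < d%:R by rewrite ltr0n.
  rewrite -[X in _ <= X]/(t%:R / d%:R) ler_pdivlMr // -natrM ler_nat.
  exact: leq_trunc_div.
rewrite -mulr_sumr ler_wpM2l //; exact: harmonic.
Qed.

Lemma sum_tau_bound (R : realType) (t : nat) : (0 < t)%N ->
  \sum_(1 <= b < t.+1) ((tau t b)%:R : R) <= t%:R * (1 + ln t%:R).
Proof.
move=> t0; rewrite -natr_sum sum_tau natr_sum; exact: sum_div_bound.
Qed.

Lemma Pi_sorted (R : realFieldType) P (m : nat) : (0 < m)%N -> sorted ltn P ->
  all (fun p => m < p)%N P -> all prime P ->
  (m%:R : R) <= Pi R P * (m + size P)%N%:R.
Proof.
elim: P m => [|p P IH] m m0 /=.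
  by move=> _ _ _; rewrite /Pi big_nil mul1r addn0.
move=> sP /andP[mp aP] /andP[pp prP].
have pP := path_sorted sP.
have allp : all (fun q => p < q)%N P by apply: order_path_min sP; exact: ltn_trans.
have aP' : all (fun q => m.+1 < q)%N P.
  by apply/allP => q qP; move/allP: allp => /(_ q qP); lia.
have h := IH m.+1 isT pP aP' prP.
rewrite /Pi big_cons -/(Pi R P).
have -> : (m + (size P).+1 = m.+1 + size P)%N by lia.
have hp : (m.+1%:R : R) <= p%:R by rewrite ler_nat.
have hm : (0 : R) < m.+1%:R by rewrite ltr0n.
have q0 : 0 <= 1 - (p%:R : R)^-1.
  by rewrite subr_ge0 invf_le1 ?ler1n ?ltr0n; lia.
have q1 : 1 - (m.+1%:R : R)^-1 <= 1 - (p%:R)^-1.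
  by rewrite lerD2l lerN2 lef_pV2 // posrE ltr0n; lia.
rewrite -mulrA; apply: le_trans (_ : (1 - (p%:R)^-1) * m.+1%:R <= _); last first.
  by apply: ler_wpM2l.
apply: le_trans (_ : (1 - (m.+1%:R)^-1) * m.+1%:R <= _); last first.
  by apply: ler_wpM2r => //; apply: ltW.
rewrite mulrBl mulVf ?mul1r; last by apply: lt0r_neq0.
by rewrite -[m.+1]addn1 natrD addrK.
Qed.

Local Open Scope ring_scope.

Lemma two_pow_prod P : all prime P -> (2 ^ size P <= \prod_(p <- P) p)%N.
Proof.
elim: P => [|p P IH] /=; first by rewrite big_nil.
move=> /andP[pp aP]; rewrite big_cons expnS; apply: leq_mul (prime_gt1 pp) (IH aP).
Qed.

Lemma two_pow_le b : (0 < b)%N -> (2 ^ size (primes b) <= b)%N.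
Proof.
move=> b0; apply: leq_trans (two_pow_prod (primes_all b)) _.
exact: dvdn_leq b0 (primes_prod_dvd b0).
Qed.

Lemma kL_le (R : realType) (b t : nat) : (0 < b)%N -> (b <= t)%N ->
  (size (primes b))%:R * ln (2 : R) <= ln (t%:R : R).
Proof.
move=> b0 bt.
have h : ((2 ^ size (primes b))%N%:R : R) <= t%:R.
  by rewrite ler_nat; apply: leq_trans (two_pow_le b0) bt.
have t0 : (0 : R) < t%:R by rewrite ltr0n; lia.
rewrite -ler_ln ?posrE ?ltr0n ?expn_gt0 // in h.
  by rewrite natrX lnXn // in h; rewrite mulr_natl.
lia.
Qed.

Lemma Pi_primes (R : realFieldType) b : (0 < b)%N ->
  1 <= Pi R (primes b) * (1 + size (primes b))%N%:R.
Proof.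
move=> b0; apply: (@Pi_sorted R (primes b) 1) => //.
  exact: sorted_primes.
  by apply/allP => p; rewrite mem_primes => /and3P[pp _ _]; apply: prime_gt1.
exact: primes_all.
Qed.

Lemma ln2_gt0 (R : realType) : 0 < ln (2 : R).
Proof. by apply: ln_gt0; rewrite ltr1n. Qed.

Lemma phi_lower (R : realType) (b t : nat) : (0 < b)%N -> (b <= t)%N ->
  b%:R * ln (2 : R) <= (F b b)%:R * (ln 2 + ln t%:R).
Proof.
move=> b0 bt.
rewrite F_self //.
have h1 := Pi_primes R b0.
have h2 := kL_le R b0 bt.
have L0 := ln2_gt0 R.
have hb : (0 : R) <= b%:R by [].
have p0 : 0 <= Pi R (primes b) by have /andP[] := Pi_ge0_le1 R (primes_all b).
rewrite natrD in h1.
move: h1 h2 L0 hb p0; move: (Pi R (primes b)) ((size (primes b))%:R : R) (ln (2 : R))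
  (ln (t%:R : R)) (b%:R : R) => P k L lt B h1 h2 L0 hb p0.
have : B * L <= B * (P * (1 + k) * L).
  apply: ler_wpM2l => //; rewrite -[X in X <= _]mul1r; apply: ler_wpM2r; lra.
have : B * P * (k * L) <= B * P * lt by apply: ler_wpM2l => //; apply: mulr_ge0.
move=> *; nra.
Qed.

Lemma W_ge (b t : nat) : (0 < b)%N -> (b <= t)%N -> (t <= 2 * (t %/ b * b))%N.
Proof.
move=> b0 bt.
have h1 := ltn_ceil t b0.
have h2 : (1 <= t %/ b)%N by rewrite leq_divRL // mul1n.
rewrite mulSn in h1; nia.
Qed.

Lemma H_lower (R : realType) (t : nat) : (0 < t)%N ->
  (t%:R : R) ^+ 3 * ln 2 <= (Ht t)%:R * (4 * (ln 2 + ln t%:R)).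
Proof.
move=> t0; rewrite Ht_eq natr_sum mulr_suml.
have L0 := ln2_gt0 R.
have lt0 : 0 <= ln (t%:R : R) by apply: ln_ge0; rewrite ler1n.
apply: le_trans (_ : \sum_(1 <= b < t.+1) (2 * t%:R * b%:R * ln 2) <= _).
  rewrite -!mulr_suml -mulr_sumr -natr_sum.
  have e := sum_iota2 t.+1.
  rewrite big_ltn // add0n in e.
  have -> : (\sum_(1 <= b < t.+1) b)%N%:R = (t%:R * (t%:R + 1) / 2 : R).
    apply: (@mulIf _ 2); first by rewrite pnatr_eq0.
    rewrite divfK ?pnatr_eq0 // -[2 in LHS]/(2%:R) -natrM mulnC e /= -[t.+1]addn1 natrM natrD.
    by rewrite mulrC.
  have tt : (0 : R) <= t%:R by [].
  move: tt L0; move: (t%:R : R) (ln (2 : R)) => T L tt L0.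
  have -> : T ^+ 3 = T * (T * T) by rewrite !exprS expr0 mulr1.
  have : 0 <= T * T * L by apply: mulr_ge0; [apply: mulr_ge0 | apply: ltW].
  nra.
apply: ler_sum_nat => b /andP[b0 bt]; rewrite ltnS in bt.
have hw := W_ge b0 bt.
have hp := phi_lower R b0 bt.
rewrite !natrM.
have hw' : (t%:R : R) <= 2 * ((t %/ b)%N%:R * b%:R).
  by rewrite -[2]/(2%:R) -!natrM ler_nat.
have hF : (0 : R) <= (F b b)%:R by [].
have hB0 : (0 : R) <= b%:R by [].
have hQ0 : (0 : R) <= (t %/ b)%N%:R by [].
move: hw' hp hF L0 lt0 hB0 hQ0; move: (t%:R : R) ((t %/ b)%N%:R : R) (b%:R : R) ((F b b)%:R : R)
  (ln (2 : R)) (ln (t%:R : R)) => T Q B Fb L lt hw' hp hF L0 lt0 hB0 hQ0.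
have hBL : 0 <= B * L by apply: mulr_ge0 => //; apply: ltW.
have hQB : 0 <= Q * B by apply: mulr_ge0.
have h1 : T * (B * L) <= (2 * (Q * B)) * (B * L) by apply: ler_wpM2r.
have h2 : (Q * B) * (B * L) <= (Q * B) * (Fb * (L + lt)) by apply: ler_wpM2l.
rewrite (_ : 2 * T * B * L = 2 * (T * (B * L))); last by ring.
rewrite (_ : Q * B * Fb * (4 * (L + lt)) = 4 * ((Q * B) * (Fb * (L + lt)))); last by ring.
move: h1 h2; rewrite -mulrA.
move: (Q * B) (B * L) (Fb * (L + lt)) (T * (B * L)) => X Y Z TY h1 h2; lra.
Qed.

Lemma KK_bound (R : realType) (t : nat) : (0 < t)%N ->
  KK R t <= 2 * (t%:R ^+ 2) * (1 + ln (t%:R : R)).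
Proof.
move=> t0; rewrite /KK.
apply: le_trans (_ : \sum_(1 <= b < t.+1) (2 * t%:R * (tau t b)%:R) <= _).
  apply: ler_sum_nat => b /andP[b0 bt]; rewrite ltnS in bt.
  have hW : ((Wt t b)%:R : R) <= t%:R by rewrite ler_nat /Wt leq_trunc_div.
  have hD : Db R b <= (tau t b)%:R by rewrite /Db ler_nat two_pow_tau.
  have hD1 := Db_ge1 R b.
  have hW0 : (0 : R) <= (Wt t b)%:R by [].
  move: hW hD hD1 hW0; move: ((Wt t b)%:R : R) (Db R b) ((tau t b)%:R : R) (t%:R : R).
  move=> W D Tau T hW hD hD1 hW0.
  have h1 : W * (D + 1) <= T * (D + 1) by apply: ler_wpM2r => //; lra.
  have h2 : T * (D + 1) <= T * (2 * Tau) by apply: ler_wpM2l; lra.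
  rewrite (_ : 2 * T * Tau = T * (2 * Tau)); last by ring.
  lra.
rewrite -mulr_sumr.
rewrite (_ : 2 * (t%:R ^+ 2) * (1 + ln (t%:R : R)) = 2 * t%:R * (t%:R * (1 + ln t%:R))); last first.
  by rewrite expr2; ring.
apply: ler_wpM2l; last exact: sum_tau_bound.
by apply: mulr_ge0.
Qed.

Local Open Scope ring_scope.

Lemma final_num (R : realFieldType) (t u L c3 K H e : R) :
  1 <= t -> 0 < c3 -> c3 <= u -> u ^+ 2 <= 4 * t -> 0 < L -> 0 <= K ->
  K <= 2 * t ^+ 2 * (1 + u) -> t ^+ 3 * L <= H * (4 * (L + u)) ->
  `|e| <= 3 * K + (K + 2 * t) ^+ 2 / (2 * H) ->
  `|e| <= (6 * (1 + 1 / c3) + 32 * (1 + 2 / c3) ^+ 2 * (1 + L / c3) / L) * t ^+ 2 * u.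
Proof.
move=> t1 c0 cu u2 L0 K0 Kb Hb eb.
set A := 1 + 2 / c3; set B := 1 + L / c3; set Z := 1 + 1 / c3.
have u0 : 0 < u by lra.
have hZ : 1 + u <= Z * u.
  rewrite /Z mulrDl mul1r addrC lerD2l mulrC mulrA mulr1 ler_pdivlMr //; lra.
have hA : 2 + u <= A * u.
  rewrite /A mulrDl mul1r addrC lerD2l mulrAC ler_pdivlMr //; nra.
have hB : L + u <= B * u.
  rewrite /B mulrDl mul1r addrC lerD2l mulrAC ler_pdivlMr //; nra.
have A0 : 0 <= A by rewrite /A; apply: addr_ge0 => //; apply: divr_ge0 => //; lra.
have B0 : 0 <= B by rewrite /B; apply: addr_ge0 => //; apply: divr_ge0 => //; lra.
have t0 : 0 < t by lra.
have t2 : 0 < t ^+ 2 by apply: exprn_gt0.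
have t3 : 0 < t ^+ 3 by apply: exprn_gt0.
have H0 : 0 < H.
  have : 0 < H * (4 * (L + u)) by apply: lt_le_trans Hb; apply: mulr_gt0.
  by rewrite pmulr_lgt0 //; apply: mulr_gt0 => //; lra.
have s1 : 3 * K <= 6 * Z * (t ^+ 2 * u).
  have : t ^+ 2 * (1 + u) <= t ^+ 2 * (Z * u) by apply: ler_wpM2l => //; apply: ltW.
  have -> : 6 * Z * (t ^+ 2 * u) = 6 * (t ^+ 2 * (Z * u)) by ring.
  lra.
have k1 : K + 2 * t <= 2 * A * (t ^+ 2 * u).
  have : 2 * t <= 2 * t ^+ 2 by rewrite expr2; nra.
  have : t ^+ 2 * (2 + u) <= t ^+ 2 * (A * u) by apply: ler_wpM2l => //; apply: ltW.
  have -> : 2 * A * (t ^+ 2 * u) = 2 * (t ^+ 2 * (A * u)) by ring.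
  move=> h1 h2; rewrite -/(t ^+ 2) in h2.
  move: h1 h2 Kb; move: (t ^+ 2 * (A * u)) (t ^+ 2) => X Y; move=> *; nra.
have k2 : (K + 2 * t) ^+ 2 <= (2 * A * (t ^+ 2 * u)) ^+ 2.
  have : 0 <= K + 2 * t by lra.
  move: k1; move: (K + 2 * t) (2 * A * (t ^+ 2 * u)) => X Y h1 h2; rewrite !expr2; nra.
have hH : t ^+ 3 * L <= H * (4 * (B * u)).
  apply: le_trans Hb _; apply: ler_wpM2l; [lra | lra].
have s2 : (K + 2 * t) ^+ 2 / (2 * H) <= 32 * A ^+ 2 * B / L * (t ^+ 2 * u).
  rewrite ler_pdivrMr; last by apply: mulr_gt0.
  apply: le_trans k2 _.
  have e1 : (2 * A * (t ^+ 2 * u)) ^+ 2 = (4 * A ^+ 2 / L) * (u ^+ 2 * (t * (t ^+ 3 * L))).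
    by field; lra.
  rewrite e1.
  have q0 : 0 <= 4 * A ^+ 2 / L.
    apply: divr_ge0; [apply: mulr_ge0; [lra | exact: exprn_ge0] | lra].
  have hX : (4 * A ^+ 2 / L) * (u ^+ 2 * (t * (t ^+ 3 * L))) <=
      (4 * A ^+ 2 / L) * ((4 * t) * (t * (H * (4 * (B * u))))).
    apply: ler_wpM2l => //; apply: ler_pM => //.
    - exact: sqr_ge0.
    - by apply: mulr_ge0; [lra | apply: mulr_ge0; [apply: ltW | lra]].
    - by apply: ler_wpM2l => //; lra.
  apply: (le_trans hX); rewrite le_eqVlt; apply/orP; left; apply/eqP; field; lra.
have : `|e| <= 6 * Z * (t ^+ 2 * u) + 32 * A ^+ 2 * B / L * (t ^+ 2 * u) by lra.
move=> h; apply: le_trans h _; rewrite le_eqVlt; apply/orP; left; apply/eqP.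
rewrite /Z /A /B; field; lra.
Qed.

Local Open Scope ring_scope.

Lemma edge_bound (R : realFieldType) t n b (l : R) :
  (0 < t)%N -> (0 < n)%N -> (0 < b)%N -> (b <= t)%N -> 0 <= l -> l <= 1 ->
  0 < ((Ht t)%:R : R) ->
  `|((Sy t n b)%:R + l * ((t %/ b) * n)%N%:R) -
    (t%:R / 2 + (Sx t n b)%:R + l * ((t %/ b) * b)%N%:R) ^+ 2 / (2 * (Ht t)%:R)|
  <= 3 * KK R t + (KK R t + 2 * t%:R) ^+ 2 / (2 * (Ht t)%:R).
Proof.
move=> t0 n0 b0 bt l0 l1 H0.
have -> : t%:R / 2 + (Sx t n b)%:R + l * ((t %/ b) * b)%N%:R =
  t%:R / 2 + ((Sx t n b)%:R + l * ((t %/ b) * b)%N%:R) :> R by rewrite addrA.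
apply: (@alg_final R _ _ (n%:R / b%:R)) => //.
- have hX := X_approx R t b0 n0.
  have hW : (((t %/ b) * b)%N%:R : R) <= t%:R by rewrite ler_nat leq_trunc_div.
  have hW0 : (0 : R) <= ((t %/ b) * b)%N%:R by [].
  have hl : 0 <= l * ((t %/ b) * b)%N%:R <= t%:R.
    apply/andP; split; first by apply: mulr_ge0.
    move: hW hW0 l0 l1; move: (((t %/ b) * b)%N%:R : R) (t%:R : R) => W T; nra.
  rewrite addrAC; apply: le_trans (ler_normD _ _) _; apply: lerD => //.
  by rewrite ger0_norm //; case/andP: hl.
- have hY := Y_approx R b0 n0 t0.
  have e : ((Sy t n b)%:R + l * ((t %/ b) * n)%N%:R) -
      n%:R / b%:R * ((Sx t n b)%:R + l * ((t %/ b) * b)%N%:R) =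
      (Sy t n b)%:R - n%:R / b%:R * (Sx t n b)%:R :> R.
    rewrite !natrM; field; rewrite pnatr_eq0 -lt0n //.
  by rewrite e.
- exact: KK_ge0.
Qed.

Lemma point_bound (R : realType) t (x y : R) : (0 < t)%N -> on_grid_parabola t x y ->
  0 < ((Ht t)%:R : R) ->
  `|y - x ^+ 2 / (2 * (Ht t)%:R)| <= 3 * KK R t + (KK R t + 2 * t%:R) ^+ 2 / (2 * (Ht t)%:R).
Proof.
move=> t0 [n [b [neg [l [hin l0 l1 hc]]]]] H0.
move: hin; rewrite /inSt => /andP[/andP[b0 bt] _].
have K0 := KK_ge0 R t.
move: hc; case: (eqVneq n 0%N) => [n0 [-> ->] | nn0 /= [-> ->]].
  have T0 : (0 : R) <= t%:R by [].
  move: K0 T0 H0 l0 l1; move: (KK R t) (t%:R : R) ((Ht t)%:R : R) => K T H K0 T0 H0 l0 l1.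
  have z1 : - (K + 2 * T) <= - (T / 2) + l * T by nra.
  have z2 : - (T / 2) + l * T <= K + 2 * T by nra.
  have hz : (- (T / 2) + l * T) ^+ 2 <= (K + 2 * T) ^+ 2 by rewrite !expr2; nra.
  rewrite sub0r normrN ger0_norm; last first.
    by apply: divr_ge0; [exact: sqr_ge0 | lra].
  have h2H : 0 < 2 * H by lra.
  have : (- (T / 2) + l * T) ^+ 2 / (2 * H) <= (K + 2 * T) ^+ 2 / (2 * H).
    by rewrite ler_pM2r // invr_gt0.
  lra.
have n0 : (0 < n)%N by rewrite lt0n.
case: neg; rewrite ?sqrrN; exact: edge_bound.
Qed.

Lemma ln_sq_le (R : realType) (t : R) : 1 <= t -> ln t ^+ 2 <= 4 * t.
Proof.
move=> t1.
have t0 : 0 <= t by lra.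
have [v [v2 v0]] : exists v, v ^+ 2 = t /\ 0 <= v.
  by exists (Num.sqrt t); rewrite sqr_sqrtr // sqrtr_ge0.
have v1 : 1 <= v.
  rewrite leNgt; apply/negP => hv.
  have : v ^+ 2 < 1 by rewrite expr2; nra.
  lra.
have vp : 0 < v by lra.
have e : ln t = ln v + ln v by rewrite -v2 expr2 lnM ?posrE.
have l0 : 0 <= ln v by apply: ln_ge0.
have l1 : ln v < v by apply: ln_sublinear.
rewrite e -v2; clear e v2 t1 t0 vp v1; move: l0 l1 v0; move: (ln v) => a l0 l1 w0.
rewrite !expr2; nra.
Qed.

Unset Implicit Arguments.
Theorem proposition2 (R : realType) :
  exists (C : R) (t0 : nat), forall t : nat, (t0 <= t)%N ->
    forall x y : R, on_grid_parabola t x y ->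
      `| y - x ^+ 2 / (2 * (Ht t)%:R) | <= C * (t%:R) ^+ 2 * ln (t%:R).
Proof.
set c3 : R := ln 3; set L : R := ln 2.
exists (6 * (1 + 1 / c3) + 32 * (1 + 2 / c3) ^+ 2 * (1 + L / c3) / L), 3%N.
move=> t t3 x y hxy.
have t0 : (0 < t)%N by lia.
have c0 : 0 < c3 by apply: ln_gt0; rewrite ltr1n.
have L0 : 0 < L by apply: ln_gt0; rewrite ltr1n.
have t1 : (1 : R) <= t%:R by rewrite ler1n.
have cu : c3 <= ln t%:R.
  by rewrite /c3 ler_ln ?posrE ?ltr0n // ler_nat.
have u2 := ln_sq_le t1.
have Hb := H_lower R t0; rewrite -/L in Hb.
have Kb := KK_bound R t0.
have K0 := KK_ge0 R t.
have H0 : 0 < ((Ht t)%:R : R).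
  have u0 : 0 <= ln (t%:R : R) by apply: ln_ge0.
  have t3p : (0 : R) < t%:R ^+ 3 by apply: exprn_gt0; lra.
  have : 0 < (Ht t)%:R * (4 * (L + ln t%:R)).
    by apply: lt_le_trans Hb; apply: mulr_gt0.
  by rewrite pmulr_lgt0 //; apply: mulr_gt0 => //; lra.
have eb := point_bound t0 hxy H0.
exact: final_num t1 c0 cu u2 L0 K0 Kb Hb eb.
Qed.
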